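(* Let $u\in L_{\mathrm{up}}$ and $(\ell_1,\ell_2)\in A_u$. Then (a) $\mathrm{apex}(\ell_1)$ is a strict ancestor of $\mathrm{apex}(\ell_2)$ in $G$, and (b) $P_{u,\ell_1}$ is the edge set of a subpath of the $\mathrm{apex}(\ell_1)$-$\mathrm{apex}(\ell_2)$ path in $G$.
   Context: Let $(G=(V,E),L,w)$ be a WTAP instance (spanning tree $G$, links $L\subseteq\binom V2$, weights $w>0$) with a fixed root $r\in V$, and let $F\subseteq L$ be a WTAP solution, i.e. $\bigcup_{\ell\in F}P_\ell=E$, where $P_\ell$ is the edge set of the tree path between the endpoints of $\ell$ and $V_\ell$ its vertex set. Ancestors of $v$ are the vertices on the $r$-$v$ path in $G$ (including $r$ and $v$); strict ancestors exclude $v$; descendants are defined reciprocally. $\mathrm{apex}(\ell)$ is the vertex of $V_\ell$ closest to $r$. An up-link is a link $\{t,b\}$ with $t$ an ancestor of $b$; $L_{\mathrm{up}}$ is the set of up-links. For $v\in V$ let $B_v=\{\ell\in F\colon\mathrm{apex}(\ell)\text{ is a descendant of }v\}$. For an up-link $u=\{t,b\}$ with $t$ an ancestor of $b$, let $v_u$ be the ancestor of $t$ farthest from $r$ such that $P_u\subseteq\bigcup_{\ell\in B_{v_u}}P_\ell$, and fix $F_u\subseteq B_{v_u}$ inclusion-wise minimal with $P_u\subseteq\bigcup_{\ell\in F_u}P_\ell$. For $\ell\in F_u$ let $P_{u,\ell}=P_u\setminus\bigcup_{\bar\ell\in F_u\setminus\{\ell\}}P_{\bar\ell}$; these sets are nonempty,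 pairwise disjoint, and each is the edge set of a path. Define $\ell_1\prec_u\ell_2$ iff the edges of $P_{u,\ell_1}$ appear before those of $P_{u,\ell_2}$ on the $t$-$b$ path in $G$. If $\ell_1\prec_u\cdots\prec_u\ell_q$ are the links of $F_u$, let $A_u=\{(\ell_i,\ell_{i+1})\colon i=1,\dots,q-1\}$. *)

(* Defs.v *)
From mathcomp Require Import all_boot all_order all_algebra.
Set Implicit Arguments. Unset Strict Implicit. Unset Printing Implicit Defensive.

Section WTAP.
Variable V : finType.
(* Tree edges and links are 2-element subsets of V. *)
Variable E : {set {set V}}.

Definition adj : rel V := fun a b => [set a; b] \in E.

Definition edge_seq (q : seq V) : seq {set V} :=
  match q with [::] => [::] | a :: s => pairmap (fun x y => [set x; y]) a s end.

Definition is_tpath (x y : V) (q : seq V) : bool :=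
  match q with
  | [::] => false
  | a :: s => [&& a == x, last a s == y, path adj a s & uniq q]
  end.

Definition is_spanning_tree : Prop :=
  (forall e, e \in E -> #|e| = 2) /\ (forall x y, exists! q, is_tpath x y q).

Definition tdepth (r v : V) (n : nat) : Prop :=
  exists q, is_tpath r v q /\ size q = n.+1.

Definition ancestor (r a v : V) : Prop := exists q, is_tpath r v q /\ a \in q.
Definition strict_ancestor (r a v : V) : Prop := ancestor r a v /\ a <> v.

(* c \in V_l *)
Definition on_link_path (l : {set V}) (c : V) : Prop :=
  exists x y q, l = [set x; y] /\ is_tpath x y q /\ c \in q.
(* e \in P_l *)
Definition link_path (l : {set V}) (e : {set V}) : Prop :=
  exists x y q, l = [set x; y] /\ is_tpath x y q /\ e \in edge_seq q.

(* a = apex(l): the vertex of V_l closest to r *)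
Definition is_apex (r : V) (l : {set V}) (a : V) : Prop :=
  on_link_path l a /\
  forall c, on_link_path l c -> forall n m, tdepth r a n -> tdepth r c m -> n <= m.

Definition is_WTAP_solution (F : {set {set V}}) : Prop :=
  forall e, e \in E <-> exists2 l, l \in F & link_path l e.

Definition inB (r : V) (F : {set {set V}}) (v : V) (l : {set V}) : Prop :=
  l \in F /\ exists a, is_apex r l a /\ ancestor r v a.

Definition covered_by (S : {set V} -> Prop) (u : {set V}) : Prop :=
  forall e, link_path u e -> exists l, S l /\ link_path l e.

(* v = v_u, where t is the upper endpoint of u *)
Definition is_vu (r : V) (F : {set {set V}}) (t : V) (u : {set V}) (v : V) : Prop :=
  [/\ ancestor r v t, covered_by (inB r F v) u &
   forall w, ancestor r w t -> covered_by (inB r F w) u ->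
     forall n m, tdepth r w n -> tdepth r v m -> n <= m].

Definition is_Fu (r : V) (F : {set {set V}}) (u : {set V}) (vu : V)
    (Fu : {set {set V}}) : Prop :=
  [/\ forall l, l \in Fu -> inB r F vu l,
      covered_by (fun l => l \in Fu) u &
      forall F' : {set {set V}}, F' \proper Fu -> ~ covered_by (fun l => l \in F') u].

(* e \in P_{u,l} *)
Definition Pul (u : {set V}) (Fu : {set {set V}}) (l : {set V}) (e : {set V}) : Prop :=
  link_path u e /\ forall l', l' \in Fu -> l' != l -> ~ link_path l' e.

(* l1 <_u l2: the edges of P_{u,l1} appear before those of P_{u,l2} on the
   t-b path *)
Definition prec_u (u : {set V}) (Fu : {set {set V}}) (t b : V) (l1 l2 : {set V}) : Prop :=
  forall q, is_tpath t b q -> forall e1 e2, Pul u Fu l1 e1 -> Pul u Fu l2 e2 ->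
    index e1 (edge_seq q) < index e2 (edge_seq q).

(* (l1, l2) \in A_u: l2 is the immediate successor of l1 in <_u *)
Definition in_Au (u : {set V}) (Fu : {set {set V}}) (t b : V) (l1 l2 : {set V}) : Prop :=
  [/\ l1 \in Fu, l2 \in Fu, prec_u u Fu t b l1 l2 &
      ~ exists2 l, l \in Fu & prec_u u Fu t b l1 l /\ prec_u u Fu t b l l2].

End WTAP.

(* Main.v *)
Require Import Defs.
From mathcomp Require Import all_boot all_order all_algebra.
From Stdlib Require Import Classical.
From mathcomp Require Import zify.
Set Implicit Arguments. Unset Strict Implicit. Unset Printing Implicit Defensive.

Section Tree.
Variable V : finType.
Variable E : {set {set V}}.
Hypothesis tree : is_spanning_tree E.

Local Notation ad := (adj E).
Local Notation tp := (is_tpath E).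

Lemma adjC x y : ad x y = ad y x.
Proof. by rewrite /adj setUC. Qed.

Lemma adj_neq x y : ad x y -> x != y.
Proof.
move=> h; apply/eqP=> exy; subst y.
have := (proj1 tree) _ h; by rewrite setUid cards1.
Qed.

Lemma tpathE x0 x y q : tp x y q <->
  [/\ 0 < size q, nth x0 q 0 = x, nth x0 q (size q).-1 = y, sorted ad q & uniq q].
Proof.
case: q => [|a s] /=; first by split=> // -[].
rewrite -(last_nth x0). split.
- by case/and4P => /eqP-> /eqP-> ->.
- by case=> _ -> -> -> ->; rewrite !eqxx.
Qed.

Lemma tp_uniq x y q q' : tp x y q -> tp x y q' -> q = q'.
Proof. case: tree => _ /(_ x y) [q0 [_ H]] h h'. by rewrite -(H _ h) -(H _ h'). Qed.

Lemma tp_ex x y : exists q, tp x y q.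
Proof. case: tree => _ /(_ x y) [q0 [h _]]; by exists q0. Qed.

Lemma tp_rev x y q : tp x y q -> tp y x (rev q).
Proof.
move=> /(tpathE x) [s0 h0 h1 hs hu]; apply/(tpathE x); split.
- by rewrite size_rev.
- by rewrite nth_rev // subn1.
- rewrite size_rev nth_rev; last lia. by rewrite prednK // subnn.
- rewrite rev_sorted; apply: sub_sorted hs => a b; by rewrite adjC.
- by rewrite rev_uniq.
Qed.

Lemma tp_sub x0 x y q i j : tp x y q -> i <= j -> j < size q ->
  tp (nth x0 q i) (nth x0 q j) (drop i (take j.+1 q)).
Proof.
move=> /(tpathE x0) [s0 h0 h1 hs hu] hij hj.
have sz : size (drop i (take j.+1 q)) = j.+1 - i.
  rewrite size_drop size_take; case: ifP => //; lia.
apply/(tpathE x0); split.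
- rewrite sz; lia.
- rewrite nth_drop nth_take ?addn0 //; lia.
- rewrite sz nth_drop nth_take; first by congr nth; lia. lia.
- apply: (infix_sorted _ hs). apply: infix_trans (infix_drop _ _) (infix_take _ _).
- by apply/drop_uniq/take_uniq.
Qed.

Lemma edgeP (x0 : V) q e : reflect (exists2 m, m.+1 < size q & e = [set nth x0 q m; nth x0 q m.+1]) (e \in edge_seq q).
Proof.
case: q => [|a s] /=.
  by apply: (iffP idP) => // -[m].
apply: (iffP (nthP set0)); rewrite size_pairmap.
- by case=> m hm <-; exists m => //; rewrite (nth_pairmap x0).
- by case=> m hm ->; exists m => //; rewrite (nth_pairmap x0).
Qed.

Lemma edge_sub (x0 : V) q i j e : j < size q ->
  reflect (exists2 m, i <= m < j & e = [set nth x0 q m; nth x0 q m.+1])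
          (e \in edge_seq (drop i (take j.+1 q))).
Proof.
move=> hj.
have sz : size (drop i (take j.+1 q)) = j.+1 - i.
  rewrite size_drop size_take; case: ifP => //; lia.
apply: (iffP (edgeP x0 _ _)); rewrite sz.
- case=> m hm ->; exists (i + m); first lia.
  rewrite !nth_drop !nth_take ?addnS //; lia.
- case=> m hm ->; exists (m - i); first lia.
  rewrite !nth_drop !nth_take; try lia.
  have -> : i + (m - i) = m by lia.
  by have -> : i + (m - i).+1 = m.+1 by lia.
Qed.

Lemma edge_rev1 (q : seq V) e : e \in edge_seq q -> e \in edge_seq (rev q).
Proof.
case: q => [|x0 s]; first by [].
set q := x0 :: s.
case/(edgeP x0) => m hm ->; apply/(edgeP x0); exists (size q - m.+2).
  rewrite size_rev; lia.
rewrite !nth_rev; try lia.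
have -> : size q - (size q - m.+2).+1 = m.+1 by lia.
have -> : size q - (size q - m.+2).+2 = m by lia.
by rewrite setUC.
Qed.

Lemma edge_rev (q : seq V) e : (e \in edge_seq (rev q)) = (e \in edge_seq q).
Proof.
apply/idP/idP; last exact: edge_rev1.
by move/edge_rev1; rewrite revK.
Qed.

Lemma tp_edges_sub a c q x y s : tp a c q -> x \in q -> y \in q -> tp x y s ->
  {subset edge_seq s <= edge_seq q}.
Proof.
move=> hq.
wlog le : x y s / index x q <= index y q.
  move=> W xq yq hs; case: (leqP (index x q) (index y q)) => h.
    exact: (W x y s h xq yq hs).
  move=> e; rewrite -edge_rev; apply: (W y x (rev s)) => //; [lia | exact: tp_rev].
move=> xq yq hs e.
have jq : index y q < size q by rewrite index_mem.
have := tp_sub x hq le jq; rewrite !nth_index // => hsub.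
rewrite (tp_uniq hs hsub) => /(edge_sub x _ _ jq) [m hm ->].
apply/(edgeP x); exists m => //; lia.
Qed.

Lemma set2_eq (x y x' y' : V) : [set x; y] = [set x'; y'] ->
  (x = x' /\ y = y') \/ (x = y' /\ y = x').
Proof.
move=> h.
have hx : x \in [set x'; y'] by rewrite -h set21.
have hy : y \in [set x'; y'] by rewrite -h set22.
have hx' : x' \in [set x; y] by rewrite h set21.
have hy' : y' \in [set x; y] by rewrite h set22.
move/set2P: hx; move/set2P: hy; move/set2P: hx'; move/set2P: hy'.
move=> [] ? [] ? [] ? [] ?; subst; intuition congruence.
Qed.

Lemma link_pathE x y q e : tp x y q -> link_path E [set x; y] e <-> e \in edge_seq q.
Proof.
move=> hq; split; last by move=> he; exists x, y, q.
case=> x' [y' [q' [h [hq' he]]]].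
case: (set2_eq h) => [[? ?]|[? ?]]; subst.
  by rewrite (tp_uniq hq hq').
by rewrite (tp_uniq hq (tp_rev hq')) edge_rev.
Qed.

Lemma on_link_pathE x y q c : tp x y q -> on_link_path E [set x; y] c <-> c \in q.
Proof.
move=> hq; split; last by move=> he; exists x, y, q.
case=> x' [y' [q' [h [hq' he]]]].
case: (set2_eq h) => [[? ?]|[? ?]]; subst.
  by rewrite (tp_uniq hq hq').
by rewrite (tp_uniq hq (tp_rev hq')) mem_rev.
Qed.

Lemma tp2 x y : ad x y -> tp x y [:: x; y].
Proof. move=> h; rewrite /= !eqxx h /= inE andbT; exact: adj_neq. Qed.

Variable r : V.
Definition R v : seq V := xchoose (tp_ex r v).
Lemma R_tp v : tp r v (R v). Proof. exact: xchooseP. Qed.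
Lemma R_eq v q : tp r v q -> q = R v. Proof. move=> h; exact: tp_uniq h (R_tp v). Qed.

Lemma R_inj v w : R v = R w -> v = w.
Proof.
move=> h; have /(tpathE r) [_ _ hv _ _] := R_tp v.
have /(tpathE r) [_ _ hw _ _] := R_tp w.
by rewrite -hv -hw h.
Qed.

Lemma R_size v : 0 < size (R v).
Proof. by have /(tpathE r) [] := R_tp v. Qed.

Lemma R_take v i : i < size (R v) -> R (nth r (R v) i) = take i.+1 (R v).
Proof.
move=> hi; have := tp_sub r (R_tp v) (leq0n i) hi; rewrite drop0.
have /(tpathE r) [_ -> _ _ _] := R_tp v.
by move/R_eq.
Qed.

Lemma R_mem_take c z : c \in R z -> R c = take (index c (R z)).+1 (R z).
Proof. by move=> h; rewrite -R_take ?index_mem // nth_index. Qed.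

Lemma R_size_le c z : c \in R z ->
  size (R c) <= size (R z) /\ (size (R c) = size (R z) -> c = z).
Proof.
move=> h; rewrite (R_mem_take h) size_take.
have := h; rewrite -index_mem => hi.
case: ifP => h2; split => //; try lia.
move=> _; apply: R_inj; rewrite (R_mem_take h) take_oversize //; lia.
Qed.

Lemma R_last v : v \in R v.
Proof.
have /(tpathE r) [s0 _ hv _ _] := R_tp v.
by rewrite -{1}hv mem_nth // prednK.
Qed.

Lemma neighbor z z' : ad z z' -> R z' = rcons (R z) z' \/ R z = rcons (R z') z.
Proof.
move=> hzz.
case: (boolP (z' \in R z)) => hin; last first.
  left; symmetry; apply: R_eq.
  have := R_tp z; case e: (R z) => [|a s] //= /and4P [/eqP ? /eqP hl hp hu]; subst a.
  rewrite last_rcons eqxx rcons_path hp hl hzz /=.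
  move: hin; rewrite e inE negb_or => /andP[h1 h2]; rewrite mem_rcons inE negb_or rcons_uniq h2.
  case/andP: hu => -> ->; by rewrite eqxx eq_sym h1.
right.
set i := index z' (R z).
have hi : i < size (R z) by rewrite index_mem.
have hRz' : R z' = take i.+1 (R z) by rewrite -R_take // nth_index.
have hl : (size (R z)).-1 < size (R z) by rewrite prednK // R_size.
have hzq : nth r (R z) (size (R z)).-1 = z.
  by have /(tpathE r) [] := R_tp z.
have ile : i <= (size (R z)).-1 by lia.
have := tp_sub r (R_tp z) ile hl.
rewrite nth_index // hzq take_oversize ?prednK ?R_size //.
move=> hs; have hzz' : ad z' z by rewrite adjC.
have hd := tp_uniq (tp2 hzz') hs.
have := drop_nth r hi; rewrite nth_index // -hd => -[hd1].
by rewrite -(cat_take_drop i.+1 (R z)) -hd1 cats1 hRz'.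
Qed.

Lemma walk_anc c z0 zs : path ad z0 zs -> c \in R z0 ->
  (forall z, z \in zs -> R c != rcons (R z) c) ->
  forall z, z \in z0 :: zs -> c \in R z.
Proof.
elim: zs z0 => [|z1 zs IH] z0 /=.
  by move=> _ h _ z; rewrite inE => /eqP->.
case/andP=> h01 hp hc hcond.
have hc1 : c \in R z1.
  case: (neighbor h01) => e.
    by rewrite e mem_rcons inE hc orbT.
  move: hc; rewrite e mem_rcons inE => /orP[/eqP hc0|//]. subst c.
  have := hcond z1; rewrite inE eqxx => /(_ isT); by rewrite e eqxx.
move=> z; rewrite inE => /orP[/eqP->//|hz]; apply: (IH z1) => //.
move=> z' hz'; apply: hcond; by rewrite inE hz' orbT.
Qed.

Lemma tp_anc x y q c : tp x y q -> c \in q ->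
  (forall z, z \in q -> R c != rcons (R z) c) ->
  forall z, z \in q -> c \in R z.
Proof.
move=> hq hc hcond z.
case/splitPr: hc hq hcond => q1 q2 /(tpathE x) [_ _ _ hs _] hcond.
have hs2 : sorted ad (c :: q2).
  apply: (infix_sorted _ hs); apply: suffix_infix.
have hs1 : sorted ad (c :: rev q1).
  have h0 : sorted ad (rcons q1 c).
    apply: (infix_sorted _ hs); rewrite -cat_rcons; apply: prefix_infix.
  rewrite -rev_rcons rev_sorted; move: h0; apply: sub_sorted => a b hab /=.
  by rewrite adjC.
have hcc : c \in R c by exact: R_last.
rewrite mem_cat inE => /or3P [hz|/eqP->//|hz].
- apply: (walk_anc hs1 hcc) => [z' hz'|]; last by rewrite inE mem_rev hz orbT.
  by apply: hcond; rewrite mem_cat -mem_rev hz'.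
- apply: (walk_anc hs2 hcc) => [z' hz'|]; last by rewrite inE hz orbT.
  by apply: hcond; rewrite mem_cat inE hz' !orbT.
Qed.

Lemma apex_anc x y q a v : tp x y q -> a \in q ->
  (forall c, c \in q -> size (R a) <= size (R c)) -> v \in q -> a \in R v.
Proof.
move=> hq ha hmin; apply: (tp_anc hq ha) => z hz; apply/eqP => e.
have := hmin z hz; rewrite e size_rcons; lia.
Qed.

Lemma apex_eq x y q a w w' : tp x y q -> w \in q -> R w = rcons (R w') w ->
  w' \notin q -> a \in q ->
  (forall c, c \in q -> size (R a) <= size (R c)) -> a = w.
Proof.
move=> hq hw hw' hnq ha hmin.
have : w \in R a.
  apply: (tp_anc hq hw) => // z hz; apply/eqP; rewrite hw' => /rcons_inj [] hR.
  have e := R_inj hR.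
  by subst z; rewrite hz in hnq.
move/R_size_le => [h1 h2]; have := hmin w hw => h3.
by symmetry; apply: h2; lia.
Qed.

Lemma edge_ends (q : seq V) a c : [set a; c] \in edge_seq q -> a \in q /\ c \in q.
Proof.
case: q => [|x0 s] //.
case/(edgeP x0) => m hm /set2_eq [[-> ->]|[-> ->]]; split; apply: mem_nth => //; exact: ltnW.
Qed.

Lemma nth_edge (x0 : V) q k : k.+1 < size q ->
  nth set0 (edge_seq q) k = [set nth x0 q k; nth x0 q k.+1].
Proof.
case: q => [|a s] //= hk; rewrite (nth_pairmap x0) //.
Qed.

Lemma size_edge (q : seq V) : size (edge_seq q) = (size q).-1.
Proof. by case: q => [|a s] //=; rewrite size_pairmap. Qed.

Lemma uniq_edges (q : seq V) : uniq q -> uniq (edge_seq q).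
Proof.
elim: q => [|a s IH] //.
case: s IH => [|c s] IH //= /andP [ha hu].
rewrite IH // andbT; apply/negP => h0.
have [h _] := edge_ends (q := c :: s) h0.
by rewrite h in ha.
Qed.

Lemma ex_min (P : nat -> Prop) : (exists m, P m) -> exists m, P m /\ forall k, P k -> m <= k.
Proof.
move=> [m0 h0]; apply: NNPP => hn.
suff H : forall n k, k <= n -> ~ P k by exact: (H m0 m0 (leqnn _) h0).
elim=> [|n IH] k hk hk'.
  apply: hn; exists k; split => // j _; lia.
apply: hn; exists k; split => // j hj; case: (leqP k j) => // hjk.
exfalso; apply: (IH j) => //; lia.
Qed.

Lemma ex_max (P : nat -> Prop) N : (exists m, P m) -> (forall m, P m -> m < N) ->
  exists m, P m /\ forall k, P k -> k <= m.
Proof.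
move=> [m0 h0] hb; apply: NNPP => hn.
suff H : forall n k, N - n <= k -> ~ P k.
  by apply: (H N m0) => //; rewrite subnn.
elim=> [|n IH] k hk hk'.
  have := hb k hk'; lia.
apply: hn; exists k; split => // j hj; apply: NNPP => hjk.
apply: (IH j) => //; lia.
Qed.

Lemma tdepth_R v : tdepth E r v (size (R v)).-1.
Proof. exists (R v); split; [exact: R_tp | by rewrite prednK // R_size]. Qed.

Lemma anc_iff a v : ancestor E r a v <-> a \in R v.
Proof.
split; last by move=> h; exists (R v); split => //; exact: R_tp.
by case=> q [/R_eq -> h].
Qed.

Lemma apex_min l a x y ql : is_apex E r l a -> l = [set x; y] -> tp x y ql ->
  a \in ql /\ forall c, c \in ql -> size (R a) <= size (R c).
Proof.
move=> [ha hmin] hl hq; subst l; split; first by apply/(on_link_pathE _ hq).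
move=> c hc.
have := hmin c (proj2 (on_link_pathE _ hq) hc) _ _ (tdepth_R a) (tdepth_R c).
have := R_size a; have := R_size c; lia.
Qed.

Ltac slia := repeat match goal with
  | H : ?P |- _ =>
    let T := type of P in
    lazymatch T with Prop => idtac end;
    lazymatch P with
    | is_true ?b => lazymatch b with context[leq] => fail | _ => clear H end
    | @eq nat _ _ => fail
    | _ => clear H
    end
  end; lia.

Definition ed (Q : seq V) m := [set nth r Q m; nth r Q m.+1].

Lemma main (L F : {set {set V}}) (u : {set V}) (t b vu : V) (Fu : {set {set V}})
  (l1 l2 : {set V}) (a1 a2 : V) :
  (forall l, l \in L -> #|l| = 2) ->
  F \subset L ->
  u = [set t; b] -> ancestor E r t b ->
  is_Fu E r F u vu Fu ->
  in_Au E u Fu t b l1 l2 ->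
  is_apex E r l1 a1 -> is_apex E r l2 a2 ->
  strict_ancestor E r a1 a2 /\
  exists q s, [/\ is_tpath E a1 a2 q, infix s q &
                  forall e, e \in edge_seq s <-> Pul E u Fu l1 e].
Proof.
move=> hL hFL hu /anc_iff htQ [hFuB hcov hminF] [hl1 hl2 hprec _] hap1 hap2.
have [Q hQ] : {Q | tp r b Q} := exist _ (R b) (R_tp b).
have eQ : R b = Q by rewrite (R_eq hQ).
rewrite eQ in htQ.
have [hsz hQ0 hQn hQs hQu] := (tpathE r r b Q).1 hQ.
set n := (size Q).-1.
have hn : n < size Q by rewrite /n prednK.
have hdQ : index t Q < size Q by rewrite index_mem.
set d := index t Q.
have hd : d <= n by rewrite /n; slia.
have hQd : nth r Q d = t by rewrite nth_index.
have hp : tp t b (drop d (take n.+1 Q)).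
  by have := tp_sub r hQ hd hn; rewrite hQd hQn.
have hU : forall e, link_path E u e <-> exists2 m, d <= m < n & e = ed Q m.
  move=> e; rewrite hu (link_pathE _ hp); split.
    by move/(@edge_sub r Q d n e hn).
  by move=> h; apply/(@edge_sub r Q d n e hn).
have hlink : forall l, l \in Fu -> exists x y ql, l = [set x; y] /\ tp x y ql.
  move=> l hl; have [hlF _] := hFuB l hl.
  have /eqP/cards2P [x [y [_ ->]]] := hL l (subsetP hFL l hlF).
  by have [ql hq] := tp_ex x y; exists x, y, ql.
have Conv : forall l, l \in Fu -> forall m1 m m2, m1 <= m <= m2 -> m2 < n ->
    link_path E l (ed Q m1) -> link_path E l (ed Q m2) -> link_path E l (ed Q m).
  move=> l hl m1 m m2 hm hm2; have [x [y [ql [-> hq]]]] := hlink l hl.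
  rewrite !(link_pathE _ hq) => h1 h2.
  rewrite /ed in h1 h2.
  have [e1 _] := edge_ends h1; have [_ e2] := edge_ends h2.
  have hm12 : m1 <= m2.+1 by slia.
  have hm2' : m2.+1 < size Q by slia.
  have hsub := tp_sub r hQ hm12 hm2'.
  apply: (tp_edges_sub hq e1 e2 hsub); apply/(@edge_sub r Q m1 m2.+1 _ hm2').
  by exists m => //; slia.
have TS : forall l m, l \in Fu -> Pul E u Fu l (ed Q m) -> link_path E l (ed Q m).
  move=> l m hl [hu' hno]; have [l' [hl' hlk]] := hcov _ hu'.
  case: (eqVneq l' l) => [<-//|ne]; by have := hno l' hl' ne.
have PulQ : forall l e, Pul E u Fu l e -> exists2 m, d <= m < n & e = ed Q m.
  by move=> l e [/hU].
have Tne : forall l, l \in Fu -> exists m, d <= m < n /\ Pul E u Fu l (ed Q m).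
  move=> l hl; have hnc := hminF (Fu :\ l) (properD1 hl).
  apply: NNPP => hno; apply: hnc => e he.
  apply: NNPP => hne; apply: hno; have [m hm ee] := (hU e).1 he; subst e.
  exists m; split => //; split => // l' hl' hne' hlk.
  by apply: hne; exists l'; split => //; rewrite in_setD1 hne' hl'.
have hidx : forall m, d <= m < n ->
    index (ed Q m) (edge_seq (drop d (take n.+1 Q))) = m - d.
  move=> m hm.
  have hsp : size (drop d (take n.+1 Q)) = n.+1 - d.
    by rewrite size_drop size_take; case: ifP => _; slia.
  have hk : (m - d).+1 < size (drop d (take n.+1 Q)) by rewrite hsp; slia.
  have <- : nth set0 (edge_seq (drop d (take n.+1 Q))) (m - d) = ed Q m.
    rewrite (nth_edge r) // !nth_drop !nth_take; try slia.
    rewrite /ed; have -> : d + (m - d) = m by slia.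
    by have -> : d + (m - d).+1 = m.+1 by slia.
  apply: index_uniq; first by rewrite size_edge; slia.
  by apply/uniq_edges/drop_uniq/take_uniq.
have hne12 : l1 != l2.
  apply/eqP => e12; subst l2; have [m [hm hP]] := Tne l1 hl1.
  by have := hprec _ hp _ _ hP hP; rewrite ltnn.
have hlt : forall m1 m2, Pul E u Fu l1 (ed Q m1) -> Pul E u Fu l2 (ed Q m2) ->
    d <= m1 < n -> d <= m2 < n -> m1 < m2.
  move=> m1 m2 h1 h2 hm1 hm2; have := hprec _ hp _ _ h1 h2.
  rewrite !hidx //; slia.
have ConvT : forall m1 m m2, m1 <= m <= m2 -> d <= m1 -> m2 < n ->
    Pul E u Fu l1 (ed Q m1) -> Pul E u Fu l1 (ed Q m2) -> Pul E u Fu l1 (ed Q m).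
  move=> m1 m m2 hm hd1 hm2 P1 P2; split; first by apply/hU; exists m => //; slia.
  move=> l' hl' hne hlk.
  have [k [hk Pk]] := Tne l' hl'.
  have Sk := TS l' k hl' Pk.
  case: (leqP k m1) => hk1.
    have : link_path E l' (ed Q m1) by apply: (Conv l' hl' k m1 m) => //; slia.
    exact: P1.2 l' hl' hne.
  case: (leqP m2 k) => hk2.
    have : link_path E l' (ed Q m2) by apply: (Conv l' hl' m m2 k) => //; slia.
    exact: P2.2 l' hl' hne.
  have : link_path E l1 (ed Q k).
    apply: (Conv l1 hl1 m1 k m2); [slia | slia | exact: TS l1 m1 hl1 P1 | exact: TS l1 m2 hl1 P2].
  by move=> h; apply: (Pk.2 l1 hl1 _ h); rewrite eq_sym.
have [al [[hal Pal] almin]] :=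
  ex_min (P := fun m => d <= m < n /\ Pul E u Fu l1 (ed Q m)) (Tne l1 hl1).
have [be [[hbe Pbe] bemax]] :=
  ex_max (P := fun m => d <= m < n /\ Pul E u Fu l1 (ed Q m)) (N := n) (Tne l1 hl1)
    (fun m h => proj2 (andP h.1)).
have [lo [[hlo Slo] lomin]] :
    exists m, (d <= m < n /\ link_path E l2 (ed Q m)) /\
      forall k, d <= k < n /\ link_path E l2 (ed Q k) -> m <= k.
  apply: ex_min; have [m [hm Pm]] := Tne l2 hl2; exists m; split => //; exact: TS.
have hbelo : be < lo.
  have [g [hg Pg]] := Tne l2 hl2; have hbg := hlt be g Pbe Pg hbe hg.
  case: (ltnP be lo) => // hlobe; exfalso.
  have : link_path E l2 (ed Q be).
    apply: (Conv l2 hl2 lo be g) => //; [slia | slia | exact: TS l2 g hl2 Pg].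
  by move=> h; apply: (Pbe.2 l2 hl2 _ h); rewrite eq_sym.
have alpha_be : al <= be by apply: bemax; split.
have RQ : forall i, i < size Q -> R (nth r Q i) = take i.+1 Q.
  by move=> i hi; rewrite -eQ R_take //; rewrite eQ.
have [k ek] : exists k, lo = k.+1 by exists lo.-1; slia.
subst lo.
have [x [y [ql [el hq]]]] := hlink l2 hl2.
have [ha2 ha2min] := apex_min hap2 el hq.
have Slo' := Slo; rewrite el (link_pathE _ hq) /ed in Slo'.
have [w_in _] := edge_ends Slo'.
have hw' : R (nth r Q k.+1) = rcons (R (nth r Q k)) (nth r Q k.+1).
  rewrite !RQ; try slia. rewrite (take_nth r) //; slia.
have hnq : nth r Q k \notin ql.
  apply/negP => hin.
  have hks : k.+1 < size Q by slia.
  have hs2 := tp_sub r hQ (leqnSn k) hks.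
  have : ed Q k \in edge_seq ql.
    apply: (tp_edges_sub hq hin w_in hs2); apply/(@edge_sub r Q k k.+1 _ hks).
    by exists k => //; slia.
  rewrite -(link_pathE _ hq) -el => hS.
  have hk' : d <= k < n by slia.
  have := lomin k (conj hk' hS); slia.
have ea2 : a2 = nth r Q k.+1 := apex_eq hq w_in hw' hnq ha2 ha2min.
have [x1 [y1 [ql1 [el1 hq1]]]] := hlink l1 hl1.
have [ha1 ha1min] := apex_min hap1 el1 hq1.
have Sal := TS l1 al hl1 Pal.
rewrite el1 (link_pathE _ hq1) /ed in Sal.
have [v_in _] := edge_ends Sal.
have := apex_anc hq1 ha1 ha1min v_in; rewrite RQ; last slia.
move=> hin.
have a1Q : a1 \in Q := mem_take hin.
set d1 := index a1 Q.
have ed1 : d1 = index a1 (take al.+1 Q).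
  by rewrite /d1 -{1}(cat_take_drop al.+1 Q) index_cat hin.
have hd1 : d1 <= al.
  have : index a1 (take al.+1 Q) < size (take al.+1 Q) by rewrite index_mem.
  rewrite -ed1 size_take_min; slia.
have ea1 : nth r Q d1 = a1 by rewrite nth_index.
have hd1Q : d1 < size Q by rewrite index_mem.
split.
  split.
    apply/anc_iff; rewrite ea2 RQ; last slia.
    have hle : al.+1 <= k.+2 by slia.
    move: hin; rewrite -(take_takel Q hle); exact: mem_take.
  move=> e12; move: ea1; rewrite e12 ea2 => /eqP; rewrite nth_uniq //; [move/eqP; slia | apply: (leq_trans _ hn); slia].
exists (drop d1 (take k.+2 Q)), (drop al (take be.+2 Q)); split.
- have := tp_sub r hQ (_ : d1 <= k.+1) (_ : k.+1 < size Q); rewrite ea1 -ea2; apply; slia.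
- have -> : drop al (take be.+2 Q) = drop (al - d1) (take (be.+2 - d1) (drop d1 (take k.+2 Q))).
    rewrite take_drop drop_drop.
    have -> : be.+2 - d1 + d1 = be.+2 by slia.
    have -> : al - d1 + d1 = al by slia.
    by rewrite take_takel //; slia.
  exact: infix_trans (infix_drop _ _) (infix_take _ _).
- have hbe1 : be.+1 < size Q by slia.
  move=> e; split.
    move/(@edge_sub r Q al be.+1 e hbe1) => [m hm ->].
    apply: (ConvT al m be); try slia; [exact: Pal | exact: Pbe].
  move=> hP; have [m hm em] := PulQ l1 e hP; subst e.
  apply/(@edge_sub r Q al be.+1 _ hbe1); exists m => //.
  have := almin m (conj hm hP); have := bemax m (conj hm hP); slia.
Qed.

End Tree.

Theorem lemma8 (V : finType) (E L : {set {set V}}) (R : realFieldType)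
  (w : {set V} -> R) (r : V) (F : {set {set V}})
  (u : {set V}) (t b vu : V) (Fu : {set {set V}})
  (l1 l2 : {set V}) (a1 a2 : V) :
  is_spanning_tree E ->
  (forall l, l \in L -> #|l| = 2) ->
  (forall l, l \in L -> (0 < w l)%R) ->
  F \subset L -> is_WTAP_solution E F ->
  u \in L -> u = [set t; b] -> ancestor E r t b ->
  is_vu E r F t u vu ->
  is_Fu E r F u vu Fu ->
  in_Au E u Fu t b l1 l2 ->
  is_apex E r l1 a1 -> is_apex E r l2 a2 ->
  strict_ancestor E r a1 a2 /\
  exists q s, [/\ is_tpath E a1 a2 q, infix s q &
                  forall e, e \in edge_seq s <-> Pul E u Fu l1 e].
Proof.
move=> htree hL _ hFL _ _ hu hanc _ hFu hA hap1 hap2.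
exact: (main htree hL hFL hu hanc hFu hA hap1 hap2).
Qed.
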